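(* Let $n\ge1$ and $B,B'\in\mathrm{GL}_n(\mathbb{R})$. Then $\ker L^\Psi_B=\operatorname{Im}L^\Phi_B$ if and only if $\ker L^\Psi_{B'}=\operatorname{Im}L^\Phi_{B'}$.
   Context: $\mathcal{S}^r(\mathbb{R}^n)$ denotes symmetric $r$-linear maps $(\mathbb{R}^n)^r\to\mathbb{R}^n$; $\langle\cdot,\cdot\rangle$ is the Euclidean inner product. For $v\in\mathbb{R}^n$, $Q_v(\xi,\eta)=\langle\xi,\eta\rangle v-\langle\xi,v\rangle\eta-\langle\eta,v\rangle\xi$. For $Q\in\mathcal{S}^2(\mathbb{R}^n)$ and matrices $A,C$: $Q\circ(A,C)(\xi,\eta)=Q(A\xi,C\eta)$, $A\circ Q(\xi,\eta)=A(Q(\xi,\eta))$. For $Q,Q'\in\mathcal{S}^2(\mathbb{R}^n)$, $[Q,Q'](\xi,\eta,\theta)=\{Q(\xi,Q'(\eta,\theta))+Q(\eta,Q'(\theta,\xi))+Q(\theta,Q'(\xi,\eta))\}-\{Q'(\xi,Q(\eta,\theta))+Q'(\eta,Q(\theta,\xi))+Q'(\theta,Q(\xi,\eta))\}$. For $B=(v_1,\dots,v_n)\in\mathrm{GL}_n(\mathbb{R})$ (columns), $L^\Phi_B:M_n(\mathbb{R})^2\to\mathcal{S}^2(\mathbb{R}^n)^n$ is $L^\Phi_B(A',B'')=(A'\circ Q_{v_i}-Q_{v_i}\circ(A',I)-Q_{v_i}\circ(I,A')+Q_{\omega_i})_{1\le i\le n}$ where $B''=(\omega_1,\dots,\omega_n)$,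 and $L^\Psi_B:\mathcal{S}^2(\mathbb{R}^n)^n\to\mathcal{S}^3(\mathbb{R}^n)^{n(n-1)/2}$ is $L^\Psi_B(q_1,\dots,q_n)=([q_i,Q_{v_j}]-[q_j,Q_{v_i}])_{1\le i<j\le n}$. *)

(* Defs.v *)
From HB Require Import structures.
From mathcomp Require Import all_boot all_order all_algebra.
From mathcomp Require Import reals.
Set Implicit Arguments. Unset Strict Implicit. Unset Printing Implicit Defensive.
Import Order.TTheory GRing.Theory Num.Theory.
Local Open Scope ring_scope.

Section Defs.
Variables (R : realType) (n : nat).

Definition dotv (x y : 'cV[R]_n) : R := \sum_(k < n) x k 0 * y k 0.

Definition map2 := 'cV[R]_n -> 'cV[R]_n -> 'cV[R]_n.
Definition map3 := 'cV[R]_n -> 'cV[R]_n -> 'cV[R]_n -> 'cV[R]_n.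

Definition is_sym2 (q : map2) : Prop :=
  (forall x y, q x y = q y x) /\
  (forall (a : R) x y z, q (a *: x + y) z = a *: q x z + q y z).

Definition Qv (v : 'cV[R]_n) : map2 :=
  fun x y => dotv x y *: v - dotv x v *: y - dotv y v *: x.

Definition bracket (Q Q' : map2) : map3 :=
  fun x y z =>
    (Q x (Q' y z) + Q y (Q' z x) + Q z (Q' x y))
  - (Q' x (Q y z) + Q' y (Q z x) + Q' z (Q x y)).

(* i-th component of L^Phi_B(A',B''); v_i, omega_i are the i-th columns *)
Definition LPhi (B A' B'' : 'M[R]_n) (i : 'I_n) : map2 :=
  fun x y =>
    A' *m Qv (col i B) x y - Qv (col i B) (A' *m x) y
    - Qv (col i B) x (A' *m y) + Qv (col i B'') x y.

Definition LPsi (B : 'M[R]_n) (q : 'I_n -> map2) (i j : 'I_n) : map3 :=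
  fun x y z => bracket (q i) (Qv (col j B)) x y z
             - bracket (q j) (Qv (col i B)) x y z.

Definition ker_eq_im (B : 'M[R]_n) : Prop :=
  forall q : 'I_n -> map2, (forall i, is_sym2 (q i)) ->
    ((forall i j : 'I_n, (i < j)%N -> forall x y z, LPsi B q i j x y z = 0)
     <-> exists A' B'' : 'M[R]_n, forall i x y, q i x y = LPhi B A' B'' i x y).

End Defs.

(* Main.v *)
Require Import Defs.
From HB Require Import structures.
From mathcomp Require Import all_boot all_order all_algebra.
From mathcomp Require Import reals.
From mathcomp Require Import ring.
From Stdlib Require Import FunctionalExtensionality.
Set Implicit Arguments. Unset Strict Implicit. Unset Printing Implicit Defensive.
Import Order.TTheory GRing.Theory Num.Theory.
Local Open Scope ring_scope.

Section Helpers.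
Variables (R : realType) (n : nat).
Implicit Types (v w x y z : 'cV[R]_n) (C D B : 'M[R]_n).

Lemma lin_sum (V W : lmodType R) (f : V -> W)
  (hf : forall a (u u2 : V), f (a *: u + u2) = a *: f u + f u2)
  (c : 'I_n -> R) (w : 'I_n -> V) :
  f (\sum_k c k *: w k) = \sum_k c k *: f (w k).
Proof.
have f0 : f 0 = 0.
  have h := hf 1 0 0; rewrite !scale1r addr0 in h.
  by apply: (addrI (f 0)); rewrite addr0 -h.
have fD : forall u u2 : V, f (u + u2) = f u + f u2.
  by move=> u u2; have := hf 1 u u2; rewrite !scale1r.
have fZ : forall a (u : V), f (a *: u) = a *: f u.
  by move=> a u; have := hf a u 0; rewrite !addr0 f0 addr0.
apply: (big_ind2 (fun a b => f a = b)).
- exact: f0.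
- by move=> a b c' d <- <-; rewrite fD.
- by move=> i _; rewrite fZ.
Qed.

Lemma dotvE x y : dotv x y = (x^T *m y) 0 0.
Proof. by rewrite /dotv mxE; apply: eq_bigr => k _; rewrite mxE. Qed.

Lemma dotvC x y : dotv x y = dotv y x.
Proof. by rewrite /dotv; apply: eq_bigr => k _; rewrite mulrC. Qed.

Lemma dotv_linr a x y z : dotv x (a *: y + z) = a * dotv x y + dotv x z.
Proof. by rewrite !dotvE mulmxDr -scalemxAr !mxE. Qed.

Lemma dotv_linl a x y z : dotv (a *: x + y) z = a * dotv x z + dotv y z.
Proof. by rewrite dotvC dotv_linr !(dotvC z). Qed.

Lemma Qv_sym2 v : is_sym2 (Qv v).
Proof.
split.
  move=> x y; rewrite /Qv dotvC; apply/matrixP => r c; rewrite !mxE; ring.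
move=> a x y z; rewrite /Qv !dotv_linl.
apply/matrixP => r c; rewrite !mxE; ring.
Qed.

Lemma Qv_linv a v w x y : Qv (a *: v + w) x y = a *: Qv v x y + Qv w x y.
Proof.
rewrite /Qv !dotv_linr; apply/matrixP => r c; rewrite !mxE; ring.
Qed.

Lemma sym2_linr (q : map2 R n) : is_sym2 q ->
  forall x a y z, q x (a *: y + z) = a *: q x y + q x z.
Proof. by case=> hs hl x a y z; rewrite hs hl !(hs _ x). Qed.

Lemma col_mul B C j : col j (B *m C) = \sum_k C k j *: col k B.
Proof.
apply/matrixP => r c; rewrite !mxE summxE; apply: eq_bigr => k _.
by rewrite !mxE mulrC.
Qed.


Lemma bracket_bilin (P P' : 'I_n -> map2 R n) (c d : 'I_n -> R)
  (hP : forall l, is_sym2 (P l)) (hP' : forall k, is_sym2 (P' k)) x y z :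
  bracket (fun a b => \sum_l c l *: P l a b) (fun a b => \sum_k d k *: P' k a b) x y z
  = \sum_l \sum_k (c l * d k) *: bracket (P l) (P' k) x y z.
Proof.
have T1 : forall a b e, \sum_l c l *: P l a (\sum_k d k *: P' k b e)
   = \sum_l \sum_k (c l * d k) *: P l a (P' k b e).
  move=> a b e; apply: eq_bigr => l _.
  rewrite (lin_sum (f := P l a) (sym2_linr (hP l) a)) scaler_sumr.
  by apply: eq_bigr => k _; rewrite scalerA.
have T2 : forall a b e, \sum_k d k *: P' k a (\sum_l c l *: P l b e)
   = \sum_l \sum_k (c l * d k) *: P' k a (P l b e).
  move=> a b e; rewrite exchange_big; apply: eq_bigr => k _.
  rewrite (lin_sum (f := P' k a) (sym2_linr (hP' k) a)) scaler_sumr.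
  by apply: eq_bigr => l _; rewrite scalerA mulrC.
rewrite /bracket /= !T1 !T2.
under eq_bigr => l _ do under eq_bigr => k _ do rewrite scalerBr !scalerDr.
under eq_bigr => l _ do rewrite sumrB !big_split.
by rewrite sumrB !big_split.
Qed.


Definition comb C (q : 'I_n -> map2 R n) : 'I_n -> map2 R n :=
  fun i x y => \sum_l C l i *: q l x y.

Lemma Qv_colM B C j x y :
  Qv (col j (B *m C)) x y = \sum_k C k j *: Qv (col k B) x y.
Proof.
by rewrite col_mul (lin_sum (f := fun v => Qv v x y) (fun a u u2 => Qv_linv a u u2 x y)).
Qed.

Lemma Qv_colM_fun B C j :
  Qv (col j (B *m C)) = (fun a b => \sum_k C k j *: Qv (col k B) a b).
Proof.
by apply: functional_extensionality => a; apply: functional_extensionality => b; apply: Qv_colM.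
Qed.

Lemma LPsi_comb B C (q : 'I_n -> map2 R n) (hq : forall i, is_sym2 (q i)) i j x y z :
  LPsi (B *m C) (comb C q) i j x y z
  = \sum_l \sum_k (C l i * C k j) *: LPsi B q l k x y z.
Proof.
rewrite /LPsi !Qv_colM_fun /comb.
have hQ : forall k, is_sym2 (Qv (col k B)) by move=> k; apply: Qv_sym2.
rewrite !(bracket_bilin _ _ hq hQ).
rewrite [X in _ - X = _]exchange_big /=.
rewrite -sumrB; apply: eq_bigr => l _; rewrite -sumrB; apply: eq_bigr => k _.
by rewrite [RHS]scalerBr [C k j * _]mulrC.
Qed.


Definition psi0 B (q : 'I_n -> map2 R n) :=
  forall i j : 'I_n, (i < j)%N -> forall x y z, LPsi B q i j x y z = 0.

Lemma psi0_all B q : psi0 B q -> forall l k x y z, LPsi B q l k x y z = 0.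
Proof.
move=> h l k x y z; case: (ltngtP l k) => [lt|gt|eq].
- exact: h.
- have := h _ _ gt x y z; rewrite /LPsi => H.
  by rewrite -opprB H oppr0.
- have -> : l = k by apply: val_inj.
  by rewrite /LPsi subrr.
Qed.

Lemma psi_transport B C q : (forall i, is_sym2 (q i)) ->
  psi0 B q -> psi0 (B *m C) (comb C q).
Proof.
move=> hq h i j _ x y z; rewrite LPsi_comb //.
apply: big1 => l _; apply: big1 => k _.
by rewrite psi0_all // scaler0.
Qed.

Lemma LPhi_comb B C A' B'' i x y :
  LPhi (B *m C) A' (B'' *m C) i x y = \sum_l C l i *: LPhi B A' B'' l x y.
Proof.
rewrite /LPhi !Qv_colM mulmx_sumr.
under eq_bigr => k _ do rewrite -scalemxAr.
under [RHS]eq_bigr => k _ do rewrite scalerDr 2!scalerBr.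
by rewrite big_split /= sumrB sumrB.
Qed.

Lemma phi_transport B C A' B'' q :
  (forall i x y, q i x y = LPhi B A' B'' i x y) ->
  forall i x y, comb C q i x y = LPhi (B *m C) A' (B'' *m C) i x y.
Proof.
move=> h i x y; rewrite LPhi_comb /comb; apply: eq_bigr => l _.
by rewrite h.
Qed.

Lemma comb_comp C D q i x y : comb C (comb D q) i x y = comb (D *m C) q i x y.
Proof.
rewrite /comb; under eq_bigr => l _ do rewrite scaler_sumr.
rewrite exchange_big; apply: eq_bigr => m _.
rewrite mxE scaler_suml; apply: eq_bigr => l _.
by rewrite scalerA mulrC.
Qed.

Lemma comb1 q i x y : comb 1%:M q i x y = q i x y.
Proof.
rewrite /comb (bigD1 i) //= big1 ?addr0.
  by rewrite mxE eqxx scale1r.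
by move=> l hl; rewrite mxE (negbTE hl) scale0r.
Qed.

Lemma sym_comb C q : (forall i, is_sym2 (q i)) -> forall i, is_sym2 (comb C q i).
Proof.
move=> hq i; split.
  by move=> x y; rewrite /comb; apply: eq_bigr => l _; rewrite (proj1 (hq l)).
move=> a x y z; rewrite /comb scaler_sumr -big_split; apply: eq_bigr => l _.
by rewrite (proj2 (hq l)) scalerDr !scalerA mulrC.
Qed.

Lemma ext3 (q q' : 'I_n -> map2 R n) :
  (forall i x y, q i x y = q' i x y) -> q = q'.
Proof.
move=> h; apply: functional_extensionality => i.
apply: functional_extensionality => x; apply: functional_extensionality => y.
exact: h.
Qed.

Lemma ker_transport B C : C \in unitmx -> ker_eq_im B -> ker_eq_im (B *m C).
Proof.
move=> hC hB q hq.
set Ci := invmx C.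
set q2 := comb Ci q.
have hq2 : forall i, is_sym2 (q2 i) by apply: sym_comb.
have qE : q = comb C q2.
  apply: ext3 => i x y; rewrite /q2 comb_comp mulVmx // comb1 //.
have BE : B *m C *m Ci = B by rewrite -mulmxA mulmxV // mulmx1.
split.
- move=> hpsi.
  have h2 : psi0 B q2.
    by rewrite -{1}BE; apply: psi_transport.
  have [A' [B'' hAB]] := (proj1 (hB q2 hq2)) h2.
  exists A', (B'' *m C) => i x y.
  by rewrite qE; apply: phi_transport.
- move=> [A' [B'' hAB]].
  have h2 : forall i x y, q2 i x y = LPhi B A' (B'' *m Ci) i x y.
    by move=> i x y; rewrite -{1}BE; apply: phi_transport.
  have h3 : psi0 B q2 by apply: (proj2 (hB q2 hq2)); exists A', (B'' *m Ci).
  by rewrite qE; apply: psi_transport.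
Qed.

End Helpers.

Theorem lemma2p11 (R : realType) (n : nat) (hn : (1 <= n)%N)
  (B B' : 'M[R]_n) (hB : B \in unitmx) (hB' : B' \in unitmx) :
  ker_eq_im B <-> ker_eq_im B'.
Proof.
have gen : forall X Y : 'M[R]_n, X \in unitmx -> Y \in unitmx ->
    ker_eq_im X -> ker_eq_im Y.
  move=> X Y hX hY hk.
  have -> : Y = X *m (invmx X *m Y) by rewrite mulmxA mulmxV // mul1mx.
  apply: ker_transport => //.
  by rewrite unitmx_mul unitmx_inv hX hY.
by split; apply: gen.
Qed.
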